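(* Let $\mathbf A$ be a nonzero $m\times n$ real matrix, $\mathbf B=[\mathbf b_1\ \cdots\ \mathbf b_\ell]$ an $m\times\ell$ real matrix, and $\mathbf D$ an $n\times n$ diagonal matrix with strictly positive diagonal. Let $r:=\mathrm{rank}([\mathbf A\ \mathbf B])-\mathrm{rank}(\mathbf A)$ (so $0\le r\le\ell$). Then $$v:=\min_{\mathbf c\in\mathbb R^n,\mathbf d\in\mathbb R^\ell}\Big\{(\mathbf A\mathbf c+\mathbf B\mathbf d)^\top(\mathbf A\mathbf D\mathbf A^\top)(\mathbf A\mathbf c+\mathbf B\mathbf d):\ \|\mathbf A\mathbf c+\mathbf B\mathbf d\|_2=1,\ \mathbf B^\top(\mathbf A\mathbf c+\mathbf B\mathbf d)\le\mathbf 0,\ \mathbf d\ge\mathbf 0\Big\}$$ satisfies $v\ge v_{\min}>0$, where $$v_{\min}:=\min_{\mathbf C}\big\{\lambda_{\min}^{++}(\mathbf A\mathbf D\mathbf A^\top+\mathbf C\mathbf C^\top):\ \mathbf C\text{ is an }m\times p\text{ submatrix of }\mathbf B\text{ formed by }p\text{ of its columns},\ r\le p\le\ell\big\}$$ (for $p=0$, $\mathbf C\mathbf C^\top$ is the zero matrix).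
   Context: For a nonzero symmetric positive semidefinite matrix $\mathbf S$, $\lambda_{\min}^{++}(\mathbf S)$ is its smallest strictly positive eigenvalue. Vector inequalities are componentwise. *)

(* Defs.v *)
(* Real matrices are taken over an arbitrary real closed field R : rcfType. *)
From HB Require Import structures.
From mathcomp Require Import all_boot all_order all_algebra.
Set Implicit Arguments. Unset Strict Implicit. Unset Printing Implicit Defensive.
Import Order.TTheory GRing.Theory Num.Theory.
Local Open Scope ring_scope.

Definition is_lambda_min_pp (R : rcfType) (m : nat) (S : 'M[R]_m) (l : R) : Prop :=
  [/\ eigenvalue S l, 0 < l & forall a : R, eigenvalue S a -> 0 < a -> l <= a].

(* The m x #|J| submatrix of B formed by the columns with indices in J
   (in increasing order of index). *)
Definition colsubset (R : rcfType) (m l : nat) (B : 'M[R]_(m, l)) (J : {set 'I_l})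
  : 'M[R]_(m, #|J|) := mxsub id (@enum_val _ (mem J)) B.

Definition norm2 (R : rcfType) (m : nat) (x : 'cV[R]_m) : R :=
  Num.sqrt (\sum_i x i 0 ^+ 2).

(* Main.v *)
From HB Require Import structures.
From mathcomp Require Import all_boot all_order all_algebra.
From mathcomp Require Import complex zify.
From Stdlib Require Import Classical.
Require Import Defs.
Set Implicit Arguments. Unset Strict Implicit. Unset Printing Implicit Defensive.
Import Order.TTheory GRing.Theory Num.Theory.
Local Open Scope ring_scope.

Section Spec.
Local Open Scope sesquilinear_scope.
Variable R : rcfType.
Local Notation C := (R[i]).
Local Notation toC := (real_complex R).
Variable n : nat.
Variable S : 'M[R]_n.
Hypothesis hS : S^T = S.
Hypothesis hpsd : forall v : 'rV_n, 0 <= (v *m S *m v^T) 0 0.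

Let SC : 'M[C]_n := map_mx toC S.

Lemma toC_real (a : R) : toC a \is Num.real.
Proof. by rewrite complex_real. Qed.

Lemma SC_herm : SC \is hermsymmx.
Proof.
apply: realsym_hermsym.
  apply/is_hermitianmxP; rewrite expr0 scale1r map_mx_id // /SC.
  by rewrite map_trmx hS.
by apply/mxOverP => i j; rewrite mxE toC_real.
Qed.

Let P := spectralmx SC.
Let mu := spectral_diag SC.

Lemma SC_eq : SC = invmx P *m diag_mx mu *m P.
Proof. exact/orthomx_spectralP/hermitian_normalmx/SC_herm. Qed.

Lemma Punit : P \in unitmx.
Proof. exact: spectral_unit. Qed.

Lemma invP : invmx P = P^t*.
Proof. by rewrite invmx_unitary // spectral_unitarymx. Qed.

Lemma mu_real i : mu 0 i \is Num.real.
Proof. by have /mxOverP := hermitian_spectral_diag_real SC_herm; apply. Qed.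

Lemma PSC : P *m SC = diag_mx mu *m P.
Proof. by rewrite SC_eq !mulmxA mulmxV ?Punit // mul1mx. Qed.

Lemma mu_eig_unused i : exists a, mu 0 i = toC a /\ eigenvalue S a.
Proof.
have hmu : toC (complex.Re (mu 0 i)) = mu 0 i by rewrite RRe_real ?mu_real.
exists (complex.Re (mu 0 i)); split; first by rewrite hmu.
rewrite eigenvalue_root_char -(fmorph_root toC) map_char_poly -/SC.
suff H : root (char_poly SC) (mu 0 i) by rewrite -hmu in H.
rewrite -eigenvalue_root_char.
apply/eigenvalueP; exists (row i P).
  by rewrite -row_mul PSC mul_diag_mx; apply/rowP => j; rewrite !mxE.
apply/negP => /eqP h0.
have : row i (P *m invmx P) = 0 by rewrite row_mul h0 mul0mx.
rewrite mulmxV ?Punit // => /rowP /(_ i); rewrite !mxE eqxx /= => /eqP.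
by rewrite oner_eq0.
Qed.


Lemma muE i : toC (complex.Re (mu 0 i)) = mu 0 i.
Proof. by rewrite RRe_real ?mu_real. Qed.

Lemma mu_eig' i : eigenvalue S (complex.Re (mu 0 i)).
Proof.
rewrite eigenvalue_root_char -(fmorph_root toC) map_char_poly -/SC.
suff H : root (char_poly SC) (mu 0 i) by rewrite -muE in H.
rewrite -eigenvalue_root_char.
apply/eigenvalueP; exists (row i P).
  by rewrite -row_mul PSC mul_diag_mx; apply/rowP => j; rewrite !mxE.
apply/negP => /eqP h0.
have : row i (P *m invmx P) = 0 by rewrite row_mul h0 mul0mx.
rewrite mulmxV ?Punit // => /rowP /(_ i); rewrite !mxE eqxx /= => /eqP.
by rewrite oner_eq0.
Qed.

Lemma SCinvP : SC *m invmx P = invmx P *m diag_mx mu.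
Proof. by rewrite SC_eq -!mulmxA mulmxV ?Punit // mulmx1. Qed.

Lemma eig_mu a : eigenvalue S a -> exists i, mu 0 i = toC a.
Proof.
move=> /eigenvalueP [v hv vN0].
pose vC := map_mx toC v.
have hvC : vC *m SC = toC a *: vC by rewrite /vC /SC -map_mxM hv map_mxZ.
pose w := vC *m invmx P.
have hw : w *m diag_mx mu = toC a *: w.
  by rewrite /w -mulmxA -SCinvP mulmxA hvC scalemxAl.
have wN0 : w != 0.
  apply/negP => /eqP w0.
  have : w *m P = 0 by rewrite w0 mul0mx.
  rewrite /w mulmxKV ?Punit //.
  move/eqP; rewrite map_mx_eq0 => /eqP v0; by rewrite v0 eqxx in vN0.
have [j wj] : exists j, w 0 j != 0.
  apply/existsP; rewrite -negb_forall; apply: contra wN0 => /forallP h.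
  by apply/eqP/rowP => j; move: (h j) => /eqP ->; rewrite mxE.
exists j; move/rowP: hw => /(_ j); rewrite mul_mx_diag !mxE mulrC => /mulIf.
by apply; move: wj; rewrite mxE.
Qed.

Lemma sqr_pos (F : realFieldType) k (v : 'rV[F]_k) : v != 0 -> 0 < (v *m v^T) 0 0.
Proof.
move=> vN0; have hs : (v *m v^T) 0 0 = \sum_j v 0 j ^+ 2.
  by rewrite mxE; apply: eq_bigr => j _; rewrite mxE expr2.
rewrite hs lt_def sumr_ge0 ?andbT; last by move=> j _; rewrite sqr_ge0.
apply: contra vN0; rewrite psumr_eq0; last by move=> j _; rewrite sqr_ge0.
move=> /allP h; apply/eqP/rowP => j; rewrite !mxE; apply/eqP.
by rewrite -sqrf_eq0; apply: (h j); rewrite mem_index_enum.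
Qed.

Lemma eig_ge0 a : eigenvalue S a -> 0 <= a.
Proof.
move=> /eigenvalueP [v hv vN0].
have := hpsd v; rewrite hv -scalemxAl mxE.
by rewrite pmulr_lge0 // sqr_pos.
Qed.


Lemma lam_exists : S != 0 -> exists lam, is_lambda_min_pp S lam.
Proof.
move=> SN0; pose a i := complex.Re (mu 0 i).
have [i0 hi0] : exists i, mu 0 i != 0.
  apply/existsP; rewrite -negb_forall; apply: contra SN0 => /forallP h.
  have mu0 : mu = 0 by apply/rowP => j; rewrite mxE; apply/eqP.
  have : SC == 0 by rewrite SC_eq mu0 raddf0 mulmx0 mul0mx.
  by rewrite map_mx_eq0.
have ai0 : 0 < a i0.
  rewrite lt_def eig_ge0 ?mu_eig' // andbT; apply: contra hi0 => /eqP h.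
  by rewrite -muE -/(a i0) h raddf0.
case: (@arg_minP _ _ _ i0 (fun i => 0 < a i) a ai0) => i1 hi1 hmin.
exists (a i1); split => //; first exact: mu_eig'.
move=> b hb bpos; have [j hj] := eig_mu hb.
have -> : b = a j by rewrite /a hj.
by apply: hmin; rewrite /a hj.
Qed.


Lemma lam_bound lam : is_lambda_min_pp S lam -> forall z : 'rV_n,
  lam * ((z *m S) *m (z *m S)^T) 0 0 <= ((z *m S) *m S *m (z *m S)^T) 0 0.
Proof.
move=> [_ lpos lmin] z; set u := z *m S.
rewrite -lecR rmorphM /=.
pose uC := map_mx toC u.
have uCt : map_mx toC u^T = uC^t*.
  by apply/matrixP => i j; rewrite !mxE conj_Creal ?toC_real.
have e1 : toC ((u *m u^T) 0 0) = (uC *m uC^t*) 0 0.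
  by rewrite -uCt -map_mxM [RHS]mxE.
have e2 : toC ((u *m S *m u^T) 0 0) = (uC *m SC *m uC^t*) 0 0.
  by rewrite -uCt /SC -!map_mxM [RHS]mxE.
pose w := uC *m P^t*.
have uCw : uC = w *m P by rewrite /w -invP mulmxKV ?Punit.
have PPt : P *m P^t* = 1%:M by apply/unitarymxP/spectral_unitarymx.
have ww : uC *m uC^t* = w *m w^t*.
  by rewrite uCw trmx_mul map_mxM !mulmxA -(mulmxA w) PPt mulmx1.
have wSw : uC *m SC *m uC^t* = w *m diag_mx mu *m w^t*.
  rewrite uCw SC_eq trmx_mul map_mxM !mulmxA mulmxK ?Punit //.
  by rewrite -(mulmxA (w *m diag_mx mu)) PPt mulmx1.
have wdiag : forall j, mu 0 j = 0 -> w 0 j = 0.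
  have -> : w = (map_mx toC z *m invmx P) *m diag_mx mu.
    by rewrite /w /uC /u map_mxM -/SC -invP -mulmxA SCinvP mulmxA.
  by move=> j mu0; rewrite mul_mx_diag mxE mu0 mulr0.
clearbody w; rewrite e1 e2 ww wSw mxE [X in _ <= X]mxE mulr_sumr; apply: ler_sum => j _.
rewrite mul_mx_diag !mxE.
case: (eqVneq (mu 0 j) 0) => [m0|mN0]; first by rewrite wdiag // !mul0r mulr0.
have ej := mu_eig' j.
have bpos : 0 < complex.Re (mu 0 j).
  rewrite lt_def eig_ge0 // andbT; apply: contra mN0 => /eqP h.
  by rewrite -muE h raddf0.
have hlb := lmin _ ej bpos.
rewrite -muE [X in _ <= X]mulrAC [X in _ <= X]mulrC; apply: ler_wpM2r; first exact: mul_conjC_ge0.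
by rewrite lecR.
Qed.

End Spec.

Lemma ker_orth (R : rcfType) k (S : 'M[R]_k) (hS : S^T = S)
  (hpsd : forall v : 'rV_k, 0 <= (v *m S *m v^T) 0 0) lam :
  is_lambda_min_pp S lam -> forall y : 'cV_k,
  (forall v : 'cV_k, S *m v = 0 -> (y^T *m v) 0 0 = 0) ->
  lam * (y^T *m y) 0 0 <= (y^T *m S *m y) 0 0.
Proof.
move=> hl y hy.
have : (y^T <= S)%MS.
  rewrite submxE; apply/eqP/rowP => j.
  have := hy (cokermx S *m delta_mx j 0); rewrite mulmxA mulmx_coker mul0mx.
  move=> /(_ erefl); rewrite mulmxA -colE mxE => ->.
  by rewrite mxE.
case/submxP => z hz.
by have := lam_bound hS hpsd hl z; rewrite -hz trmxK.
Qed.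

Section Helpers.
Variable R : realFieldType.

Lemma sqr_pos' k (v : 'rV[R]_k) : v != 0 -> 0 < (v *m v^T) 0 0.
Proof.
move=> vN0; have hs : (v *m v^T) 0 0 = \sum_j v 0 j ^+ 2.
  by rewrite mxE; apply: eq_bigr => j _; rewrite mxE expr2.
rewrite hs lt_def sumr_ge0 ?andbT; last by move=> j _; rewrite sqr_ge0.
apply: contra vN0; rewrite psumr_eq0; last by move=> j _; rewrite sqr_ge0.
move=> /allP h; apply/eqP/rowP => j; rewrite !mxE; apply/eqP.
by rewrite -sqrf_eq0; apply: (h j); rewrite mem_index_enum.
Qed.

Lemma gram_row a b (X : 'M[R]_(a, b)) (v : 'rV_a) :
  v *m (X *m X^T) = 0 -> v *m X = 0.
Proof.
move=> h; apply/eqP; apply/negPn/negP => /sqr_pos'.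
by rewrite trmx_mul mulmxA -(mulmxA v) h mul0mx mxE ltxx.
Qed.

Lemma sub_gram a b (X : 'M[R]_(a, b)) : (X^T <= X *m X^T)%MS.
Proof.
have s1 : (X *m X^T <= X^T)%MS by apply: submxMl.
have hk : (kermx (X *m X^T) <= kermx X)%MS.
  apply/sub_kermxP/row_matrixP => i; rewrite row_mul row0.
  by apply: gram_row; rewrite -row_mul mulmx_ker row0.
have := mxrankS hk; rewrite !mxrank_ker => hle.
have r1 := rank_leq_row X; have r2 := rank_leq_row (X *m X^T).
have r3 := mxrank_tr X.
have := mxrank_leqif_sup s1 => -[_ <-].
have r4 := mxrankS s1; apply/eqP; rewrite r3 in hle r4 *; lia.
Qed.

Lemma dotC k (u v : 'cV[R]_k) : (u^T *m v) 0 0 = (v^T *m u) 0 0.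
Proof. by rewrite !mxE; apply: eq_bigr => i _; rewrite !mxE mulrC. Qed.


Lemma fin_min (T : finType) (P : pred T) (Q : T -> R -> Prop) :
  (forall t, P t -> exists v, Q t v) ->
  (forall t v1 v2, Q t v1 -> Q t v2 -> v1 = v2) ->
  (exists t, P t) ->
  exists vmin, (exists2 t, P t & Q t vmin) /\
               (forall t v, P t -> Q t v -> vmin <= v).
Proof.
move=> hex huniq [t0 Pt0].
suff H : forall s : seq T, (exists2 t, t \in s & P t) ->
  exists vmin, (exists2 t, P t & Q t vmin) /\
    (forall t v, t \in s -> P t -> Q t v -> vmin <= v).
  have [|vmin [h1 h2]] := H (index_enum T).
    by exists t0; rewrite ?mem_index_enum.
  by exists vmin; split => // t v; apply: h2; rewrite mem_index_enum.
elim=> [[t]|t s IH]; first by rewrite in_nil.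
move=> hts; case: (boolP (P t)) => Pt.
  have [vt Qt] := hex _ Pt.
  case: (boolP (has P s)) => hs.
    have [|v' [[t' Pt' Qt'] h']] := IH.
      by have [t' ts Pt'] := hasP hs; exists t'.
    case: (leP vt v') => hle.
      exists vt; split; first by exists t.
      move=> u v; rewrite in_cons => /orP [/eqP -> _ Qu|us Pu Qu].
        by rewrite (huniq _ _ _ Qu Qt).
      by apply: le_trans hle (h' _ _ us Pu Qu).
    exists v'; split; first by exists t'.
    move=> u v; rewrite in_cons => /orP [/eqP -> _ Qu|us Pu Qu].
      by rewrite (huniq _ _ _ Qu Qt) ltW.
    exact: h' _ _ us Pu Qu.
  exists vt; split; first by exists t.
  move=> u v; rewrite in_cons => /orP [/eqP -> _ Qu|us Pu Qu].
    by rewrite (huniq _ _ _ Qu Qt).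
  by move: hs => /hasPn /(_ _ us); rewrite Pu.
have [|v' [h1 h']] := IH.
  case: hts => u; rewrite in_cons => /orP [/eqP ->|us Pu]; first by rewrite (negbTE Pt).
  by exists u.
exists v'; split => // u v; rewrite in_cons => /orP [/eqP -> Pu|us Pu Qu].
  by rewrite Pu in Pt.
exact: h' _ _ us Pu Qu.
Qed.

End Helpers.

Lemma sq_ge0 (R : realFieldType) k (u : 'cV[R]_k) : 0 <= (u^T *m u) 0 0.
Proof. by rewrite mxE sumr_ge0 // => i _; rewrite !mxE -expr2 sqr_ge0. Qed.

Lemma add00 (R : realFieldType) (X Y : 'M[R]_1) : (X + Y) 0 0 = X 0 0 + Y 0 0.
Proof. by rewrite mxE. Qed.

Section Main.
Variable R : rcfType.
Variables m n l : nat.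
Variable A : 'M[R]_(m, n).
Variable B : 'M[R]_(m, l).

Definition supp (d : 'cV[R]_l) : {set 'I_l} := [set j | d j 0 != 0].
Definition indep (J : {set 'I_l}) : Prop :=
  forall a : 'cV[R]_l, (forall j, j \notin J -> a j 0 = 0) ->
    (exists g : 'cV_n, B *m a = A *m g) -> a = 0.

Lemma cvN0 k (v : 'cV[R]_k) : v != 0 -> exists j, v j 0 != 0.
Proof.
move=> vN0; have : [exists j, v j 0 != 0].
  rewrite -negb_forall; apply: contra vN0 => /forallP h.
  by apply/eqP/colP => j; move: (h j) => /eqP ->; rewrite mxE.
by move/existsP.
Qed.

Lemma cara k : forall (d : 'cV[R]_l) (c : 'cV[R]_n), (#|supp d| < k)%N ->
  (forall j, 0 <= d j 0) ->
  exists (c' : 'cV[R]_n) (d' : 'cV[R]_l), [/\ forall j, 0 <= d' j 0, A *m c + B *m d = A *m c' + B *m d'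
                  & indep (supp d')].
Proof.
elim: k => [//|k IH] d c hk hd.
case: (classic (indep (supp d))) => hind; first by exists c, d.
have [a [hsa [[g hg] aN0]]] : exists a : 'cV_l, (forall j, j \notin supp d -> a j 0 = 0)
   /\ (exists g : 'cV_n, B *m a = A *m g) /\ a != 0.
  apply: NNPP => hn; apply: hind => a h1 h2; apply/eqP/negPn/negP => hN.
  by apply: hn; exists a.
have [b [hbs [[g' hg'] [j0 hj0]]]] : exists b : 'cV_l,
   (forall j, j \notin supp d -> b j 0 = 0) /\ (exists g : 'cV_n, B *m b = A *m g)
   /\ exists j, 0 < b j 0.
  have [j0 hj0] := cvN0 aN0.
  case: (ltrgtP 0 (a j0 0)) => [hp|hn|he].
  - by exists a; split => //; split; [exists g | exists j0].
  - exists (- a); split; first by move=> j hj; rewrite mxE hsa // oppr0.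
    split; first by exists (- g); rewrite !mulmxN hg.
    by exists j0; rewrite mxE oppr_gt0.
  - by rewrite -he eqxx in hj0.
pose F j := d j 0 / b j 0.
case: (@arg_minP _ _ _ j0 (fun j => 0 < b j 0) F hj0) => j1 hj1 hmin.
pose t := F j1.
have ht : 0 <= t by rewrite /t /F divr_ge0 // ltW.
pose d2 := d - t *: b.
have hd2 : forall j, 0 <= d2 j 0.
  move=> j; rewrite !mxE subr_ge0.
  case: (ltP 0 (b j 0)) => hb.
    by have := hmin j hb; rewrite /F ler_pdivlMr.
  by apply: le_trans (hd j); apply: mulr_ge0_le0.
have hsub : supp d2 \proper supp d.
  apply/properP; split.
    apply/subsetP => j; rewrite !inE; apply: contraR; rewrite negbK => /eqP dj.
    have bj : b j 0 = 0 by apply: hbs; rewrite inE dj eqxx.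
    by rewrite !mxE dj bj mulr0 subr0.
  exists j1.
    rewrite inE; apply: contraT; rewrite negbK => /eqP dj.
    have bj : b j1 0 = 0 by apply: hbs; rewrite inE dj eqxx.
    by rewrite bj ltxx in hj1.
  by rewrite inE negbK !mxE /t /F divfK ?subrr // gt_eqF.
have hk2 : (#|supp d2| < k)%N.
  by have := proper_card hsub; lia.
have [c' [d' [h1 h2 h3]]] := IH d2 (c + t *: g') hk2 hd2.
exists c', d'; split => //; rewrite -h2 /d2 mulmxDr mulmxBr -!scalemxAr hg'.
by rewrite addrACA subrr addr0.
Qed.


Lemma ext_max k : forall J, (#|~: J| < k)%N -> indep J ->
  exists J' : {set 'I_l}, [/\ J \subset J', indep J' & forall j, j \notin J' -> ~ indep (j |: J')].
Proof.
elim: k => [//|k IH] J hk hJ.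
case: (classic (exists j, j \notin J /\ indep (j |: J))) => [[j [hj hJj]]|hno].
  have hk2 : (#|~: (j |: J)| < k)%N.
    have := cardsC J; have := cardsC (j |: J); rewrite cardsU1 hj /= => h1 h2; move: hk; rewrite ltnS; move: h1 h2; set a := #|J|; set T := #|_ : finType|; set y := #|~: J|; set x := #|~: _|. lia.
  have [J' [h1 h2 h3]] := IH _ hk2 hJj.
  by exists J'; split => //; apply: subset_trans h1; apply: subsetUr.
by exists J; split => // j hj hind; apply: hno; exists j; split.
Qed.

Lemma col_span J : indep J -> (forall j, j \notin J -> ~ indep (j |: J)) ->
  forall j, exists (g : 'cV[R]_n) (a : 'cV[R]_l),
    (forall i, i \notin J -> a i 0 = 0) /\ col j B = A *m g + B *m a.
Proof.
move=> hJ hmax j; case: (boolP (j \in J)) => hj.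
  exists 0, (delta_mx j 0); split; last by rewrite mulmx0 add0r colE.
  move=> i hi; rewrite mxE; case: eqP => // eij; by rewrite eij hj in hi.
have [a [hsa [[g hg] aN0]]] : exists a : 'cV_l, (forall i, i \notin j |: J -> a i 0 = 0)
   /\ (exists g : 'cV_n, B *m a = A *m g) /\ a != 0.
  apply: NNPP => hn; apply: (hmax j hj) => a h1 h2; apply/eqP/negPn/negP => hN.
  by apply: hn; exists a.
have aj : a j 0 != 0.
  apply: contra aN0 => /eqP aj; apply/eqP; apply: hJ; last by exists g.
  move=> i hi; case: (eqVneq i j) => [->//|ij]; apply: hsa.
  by rewrite !inE negb_or ij.
exists ((a j 0)^-1 *: g), (- (a j 0)^-1 *: (a - a j 0 *: delta_mx j 0)); split.
  move=> i hi; rewrite !mxE; case: (eqVneq i j) => [->|ij].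
    by rewrite eqxx mulr1 subrr mulr0.
  by rewrite mulr0 subr0 (hsa i) ?mulr0 // !inE negb_or ij.
rewrite -scalemxAr -hg scaleNr mulmxN -scalemxAr mulmxBr -scalemxAr -colE.
rewrite scalerBr scalerA mulVf // scale1r opprB addrC subrK //.
Qed.

Lemma B_supp (J : {set 'I_l}) (a : 'cV[R]_l) : (forall i, i \notin J -> a i 0 = 0) ->
  B *m a = colsubset B J *m (\col_k a (enum_val k) 0).
Proof.
move=> hs; apply/colP => i; rewrite !mxE.
rewrite (bigID (fun j => j \in J)) /= [X in _ + X]big1 ?addr0; last first.
  by move=> j hj; rewrite hs // mulr0.
rewrite big_enum_val; apply: eq_bigr => k _; by rewrite !mxE.
Qed.


Lemma rank_bound (J : {set 'I_l}) :
  (forall j, exists (g : 'cV[R]_n) (a : 'cV[R]_l),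
    (forall i, i \notin J -> a i 0 = 0) /\ col j B = A *m g + B *m a) ->
  (\rank (row_mx A B) - \rank A <= #|J|)%N.
Proof.
move=> hsp; set C := colsubset B J.
have hB : (B^T <= A^T + C^T)%MS.
  apply/row_subP => j; rewrite -tr_col.
  have [g [a [hs ->]]] := hsp j.
  rewrite (B_supp hs) linearD /= !trmx_mul; apply: addmx_sub_adds; exact: submxMl.
have e : \rank (row_mx A B) = \rank (A^T + B^T)%MS.
  by rewrite -mxrank_tr tr_row_mx -addsmxE.
have h1 : (A^T + B^T <= A^T + C^T)%MS by rewrite addsmx_sub addsmxSl hB.
have h2 := mxrankS h1.
have [h3 _] := mxrank_adds_leqif A^T C^T.
have h4 := rank_leq_row C^T.
rewrite mxrank_tr in h3; rewrite e; lia.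
Qed.


Lemma construct (p : nat) (C : 'M[R]_(m, p)) (x : 'cV[R]_m) (c : 'cV[R]_n) (e : 'cV[R]_p) :
  (forall b : 'cV_p, (exists g : 'cV_n, C *m b = A *m g) -> b = 0) ->
  x = A *m c + C *m e ->
  (forall k, 0 <= e k 0) ->
  (forall k, (C^T *m x) k 0 <= 0) ->
  exists y : 'cV_m, [/\ A^T *m (y - x) = 0, C^T *m y = 0,
     (x^T *m x) 0 0 <= (y^T *m y) 0 0 &
     forall v : 'cV_m, A^T *m v = 0 -> C^T *m v = 0 -> (y^T *m v) 0 0 = 0].
Proof.
move=> hind hx he hCx.
have [Gm hG] : exists Gm : 'M_(n, p), A^T *m (C - A *m Gm) = 0.
  have : (C^T *m A <= A^T *m A)%MS.
    apply: submx_trans (submxMl _ _) _; have := sub_gram A^T; by rewrite trmxK.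
  case/submxP => Q hQ; exists Q^T.
  have := congr1 trmx hQ; rewrite !trmx_mul !trmxK => hh.
  by rewrite mulmxBr mulmxA hh subrr.
set C' := C - A *m Gm.
have hCC : C = C' + A *m Gm by rewrite /C' subrK.
set G := C'^T *m C'.
have Gu : G \in unitmx.
  rewrite -row_free_unit -kermx_eq0; apply/eqP/row_matrixP => i; rewrite row0.
  set v := row i (kermx G).
  have hv : v *m G = 0 by rewrite /v -row_mul mulmx_ker row0.
  have hv2 : v *m C'^T = 0 by apply: gram_row; rewrite trmxK.
  have hvT : v^T = 0.
    apply: hind; exists (Gm *m v^T).
    have := congr1 trmx hv2; rewrite trmx_mul trmxK trmx0 /C' mulmxBl mulmxA.
    by move/eqP; rewrite subr_eq0 => /eqP.
  by rewrite -[v]trmxK hvT trmx0.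
pose al := - (invmx G *m (C^T *m x)).
pose k := C' *m al.
have hAk : A^T *m k = 0 by rewrite /k mulmxA hG mul0mx.
have hCk : C^T *m k = - (C^T *m x).
  rewrite {1}hCC linearD /= trmx_mul mulmxDl -mulmxA hAk mulmx0 addr0.
  by rewrite /k mulmxA -/G /al mulmxN mulKVmx.
exists (x + k); split.
- by rewrite addrC addKr.
- by rewrite mulmxDr hCk subrr.
- have hxk : 0 <= (x^T *m k) 0 0.
    rewrite {1}hx linearD /= !trmx_mul mulmxDl -!mulmxA hAk hCk mulmx0 add0r.
    rewrite mulmxN mxE oppr_ge0 mxE; apply: sumr_le0 => i _.
    by rewrite mxE mulr_ge0_le0.
  rewrite [(x + k)^T]linearD /= mulmxDl !mulmxDr !add00.
  rewrite -[X in X <= _]addr0 -addrA lerD //.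
  rewrite (dotC k x); apply: addr_ge0 => //; apply: addr_ge0 => //.
  exact: sq_ge0.
- move=> v hAv hCv.
  rewrite linearD /= mulmxDl mxE {1}hx linearD /= !trmx_mul mulmxDl -!mulmxA hAv hCv.
  have hC'v : C'^T *m v = 0.
    by rewrite /C' linearD /= linearN /= trmx_mul mulmxDl mulNmx -mulmxA hAv hCv mulmx0 subr0.
  by rewrite hC'v !mulmx0 !addr0 mxE; apply: addr0.
Qed.

End Main.

Section Main2.
Variable R : rcfType.
Variables m n l : nat.
Variable A : 'M[R]_(m, n).
Variable B : 'M[R]_(m, l).
Variable D : 'M[R]_n.
Hypothesis hDdiag : forall i j : 'I_n, i != j -> D i j = 0.
Hypothesis hDpos : forall i : 'I_n, 0 < D i i.

Lemma hDt : D^T = D.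
Proof.
apply/matrixP => i j; rewrite mxE; case: (eqVneq i j) => [->//|ij].
by rewrite !hDdiag // eq_sym.
Qed.

Lemma quad_diag (w : 'rV[R]_n) :
  (w *m D *m w^T) 0 0 = \sum_k D k k * (w 0 k)^+2.
Proof.
rewrite mxE; apply: eq_bigr => j _; rewrite mxE (bigD1 j) //= big1 ?addr0.
  by rewrite !mxE mulrAC mulrC expr2 mulrA.
by move=> k kj; rewrite hDdiag ?mulr0.
Qed.

Lemma quad_sq p (X : 'rV[R]_p) : (X *m X^T) 0 0 = \sum_k (X 0 k)^+2.
Proof. by rewrite mxE; apply: eq_bigr => k _; rewrite mxE expr2. Qed.

Lemma quadS p (C : 'M[R]_(m, p)) (v : 'rV_m) :
  (v *m (A *m D *m A^T + C *m C^T) *m v^T) 0 0 =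
  \sum_k D k k * ((v *m A) 0 k)^+2 + \sum_k ((v *m C) 0 k)^+2.
Proof.
rewrite mulmxDr mulmxDl add00.
have -> : v *m (A *m D *m A^T) *m v^T = (v *m A) *m D *m (v *m A)^T.
  by rewrite trmx_mul !mulmxA.
have -> : v *m (C *m C^T) *m v^T = (v *m C) *m (v *m C)^T.
  by rewrite trmx_mul !mulmxA.
by rewrite quad_diag quad_sq.
Qed.

Lemma Spsd p (C : 'M[R]_(m, p)) (v : 'rV_m) :
  0 <= (v *m (A *m D *m A^T + C *m C^T) *m v^T) 0 0.
Proof.
rewrite quadS addr_ge0 // sumr_ge0 // => k _; last exact: sqr_ge0.
by rewrite mulr_ge0 ?sqr_ge0 // ltW.
Qed.

Lemma Ssym p (C : 'M[R]_(m, p)) :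
  (A *m D *m A^T + C *m C^T)^T = A *m D *m A^T + C *m C^T.
Proof. by rewrite linearD /= !trmx_mul !trmxK hDt mulmxA. Qed.

Lemma Sker p (C : 'M[R]_(m, p)) (u : 'rV_m) :
  u *m (A *m D *m A^T + C *m C^T) = 0 -> u *m A = 0 /\ u *m C = 0.
Proof.
move=> hu; have := quadS C u; rewrite hu mul0mx mxE => /esym/eqP.
rewrite paddr_eq0; last first.
- by rewrite sumr_ge0 // => k _; rewrite sqr_ge0.
- by rewrite sumr_ge0 // => k _; rewrite mulr_ge0 ?sqr_ge0 // ltW.
rewrite !psumr_eq0; last first.
- by move=> k _; rewrite mulr_ge0 ?sqr_ge0 // ltW.
- by move=> k _; rewrite sqr_ge0.
move=> /andP [/allP h1 /allP h2]; split; apply/rowP => k.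
  have := h1 k (mem_index_enum _); rewrite mulf_eq0 sqrf_eq0 gt_eqF //=.
  by move/eqP ->; rewrite mxE.
by have := h2 k (mem_index_enum _); rewrite sqrf_eq0 => /eqP ->; rewrite mxE.
Qed.

Lemma SN0 p (C : 'M[R]_(m, p)) : A != 0 -> A *m D *m A^T + C *m C^T != 0.
Proof.
move=> hA.
have : [exists ik : 'I_m * 'I_n, A ik.1 ik.2 != 0].
  rewrite -negb_forall; apply: contra hA => /forallP h.
  by apply/eqP/matrixP => i k; move: (h (i, k)) => /eqP ->; rewrite mxE.
case/existsP => -[i k] /= hik.
pose v : 'rV[R]_m := delta_mx 0 i.
have hpos : 0 < (v *m (A *m D *m A^T + C *m C^T) *m v^T) 0 0.
  rewrite quadS /v -rowE; apply: (@lt_le_trans _ _ (D k k * (row i A 0 k)^+2)).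
    by rewrite mulr_gt0 // mxE lt_def sqrf_eq0 hik sqr_ge0.
  rewrite -[X in X <= _]addr0 lerD //; last by rewrite sumr_ge0 // => j _; rewrite sqr_ge0.
  rewrite (bigD1 k) //= -[X in X <= _]addr0 lerD // sumr_ge0 // => j _.
  by rewrite mulr_ge0 ?sqr_ge0 // ltW.
apply/negP => /eqP S0; by rewrite S0 mulmx0 mul0mx mxE ltxx in hpos.
Qed.

End Main2.

Theorem mainTheorem15 (R : rcfType) (m n l : nat)
  (A : 'M[R]_(m, n)) (B : 'M[R]_(m, l)) (D : 'M[R]_n)
  (hA : A != 0)
  (hDdiag : forall i j : 'I_n, i != j -> D i j = 0)
  (hDpos : forall i : 'I_n, 0 < D i i) :
  let r := (\rank (row_mx A B) - \rank A)%N in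
  let M := A *m D *m A^T in
  (* the admissible submatrices C: column subsets J with r <= p = #|J| (<= l) *)
  let adm := fun J : {set 'I_l} => (r <= #|J|)%N in
  (forall J, adm J -> exists lam,
     is_lambda_min_pp (M + colsubset B J *m (colsubset B J)^T) lam) /\
  exists vmin : R,
    [/\ (* vmin is the minimum defining v_min *)
        (exists2 J, adm J &
           is_lambda_min_pp (M + colsubset B J *m (colsubset B J)^T) vmin),
        (forall J lam, adm J ->
           is_lambda_min_pp (M + colsubset B J *m (colsubset B J)^T) lam ->
           vmin <= lam),
        (* v_min > 0 *)
        0 < vmin &
        (* v >= v_min: every feasible point has objective value >= v_min *)
        forall (c : 'cV[R]_n) (d : 'cV[R]_l),
          let x := A *m c + B *m d in
          norm2 x = 1 ->
          (forall j : 'I_l, (B^T *m x) j 0 <= 0) ->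
          (forall j : 'I_l, 0 <= d j 0) ->
          vmin <= (x^T *m M *m x) 0 0].
Proof.
move=> r M adm.
have Hex : forall J : {set 'I_l}, exists lam,
    is_lambda_min_pp (M + colsubset B J *m (colsubset B J)^T) lam.
  move=> J; rewrite /M; apply: lam_exists.
  - have h := Ssym A hDdiag (colsubset B J); exact h.
  - move=> v; have h := Spsd A hDdiag hDpos (colsubset B J) v; exact h.
  - have h := SN0 hDdiag hDpos (colsubset B J) hA; exact h.
split; first by move=> J _; exact: Hex.
have huniq : forall (J : {set 'I_l}) v1 v2,
    is_lambda_min_pp (M + colsubset B J *m (colsubset B J)^T) v1 ->
    is_lambda_min_pp (M + colsubset B J *m (colsubset B J)^T) v2 -> v1 = v2.
  move=> J v1 v2 [e1 p1 m1] [e2 p2 m2]; apply/eqP; rewrite eq_le.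
  by rewrite (m1 _ e2 p2) (m2 _ e1 p1).
have hT : exists J, adm J.
  exists setT; rewrite /adm /r; apply: rank_bound => j.
  exists 0, (delta_mx j 0); split; first by move=> i; rewrite inE.
  by rewrite mulmx0 add0r colE.
have [vmin [[J0 hJ0 hv0] hvmin]] := @fin_min _ _ adm _ (fun J _ => Hex J) huniq hT.
exists vmin; split; [by exists J0 | exact: hvmin | by case: hv0 | ].
move=> c d x hnorm hBx hd.
have hxx : (x^T *m x) 0 0 = 1.
  move: hnorm; rewrite /norm2 => h.
  have hs : 0 <= \sum_i x i 0 ^+ 2 by rewrite sumr_ge0 // => i _; rewrite sqr_ge0.
  have hs2 : \sum_i x i 0 ^+ 2 = 1 by rewrite -(sqr_sqrtr hs) h expr1n.
  rewrite mxE -hs2; apply: eq_bigr => i _; by rewrite mxE expr2.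
have [c' [d' [hd' hx' hind]]] := cara A B c (ltnSn #|supp d|) hd.
have [J [hsub hJ hmax]] := ext_max (ltnSn #|~: supp d'|) hind.
have hadm : adm J := rank_bound (col_span hJ hmax).
set C := colsubset B J.
have hsd : forall i, i \notin J -> d' i 0 = 0.
  move=> i hi; apply/eqP; apply: contraR hi => hi.
  by apply: (subsetP hsub); rewrite inE.
pose e : 'cV[R]_#|J| := \col_k d' (enum_val k) 0.
have hxe : x = A *m c' + C *m e by rewrite /x hx' (B_supp B hsd).
have hindC : forall b : 'cV_#|J|, (exists g : 'cV_n, C *m b = A *m g) -> b = 0.
  move=> b [g hg].
  pose a : 'cV[R]_l := \col_j \sum_(k | enum_val k == j) b k 0.
  have ha : forall i, i \notin J -> a i 0 = 0.
    move=> i hi; rewrite mxE big1 // => k /eqP hk.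
    by move: (enum_valP k); rewrite hk (negbTE hi).
  have hab : \col_k a (enum_val k) 0 = b.
    apply/colP => k; rewrite !mxE.
    rewrite (eq_bigl (fun k' => k' == k)); first by rewrite big_pred1_eq.
    by move=> k'; rewrite (inj_eq enum_val_inj).
  have a0 : a = 0 by apply: hJ => //; exists g; rewrite (B_supp B ha) hab.
  by rewrite -hab a0; apply/colP => k; rewrite !mxE.
have he : forall k, 0 <= e k 0 by move=> k; rewrite mxE.
have hCx : forall k, (C^T *m x) k 0 <= 0.
  move=> k; apply: le_trans (hBx (enum_val k)); rewrite le_eqVlt; apply/orP; left.
  by apply/eqP; rewrite !mxE; apply: eq_bigr => i _; rewrite !mxE.
have [y [hy1 hy2 hy3 hy4]] := construct hindC hxe he hCx.
have [lam hlam] := Hex J.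
have hvl := hvmin J lam hadm hlam.
have hb := ker_orth (Ssym A hDdiag C) (Spsd A hDdiag hDpos C) hlam (y := y).
have hker : forall v : 'cV_m, (M + C *m C^T) *m v = 0 -> (y^T *m v) 0 0 = 0.
  move=> v hv.
  have hv' : v^T *m (M + C *m C^T) = 0.
    by rewrite -[M + _](Ssym A hDdiag C) -trmx_mul hv trmx0.
  have [h1 h2] := Sker hDdiag hDpos hv'.
  apply: hy4.
    by rewrite -[A^T *m v]trmxK trmx_mul trmxK h1 trmx0.
  by rewrite -[C^T *m v]trmxK trmx_mul trmxK h2 trmx0.
have := hb hker.
have hSy : (y^T *m (M + C *m C^T) *m y) 0 0 = (x^T *m M *m x) 0 0.
  have hMw : M *m (y - x) = 0 by rewrite /M -mulmxA hy1 mulmx0.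
  have hCC : (y^T *m (C *m C^T) *m y) 0 0 = 0.
    by rewrite -!mulmxA hy2 !mulmx0 mxE.
  rewrite mulmxDr mulmxDl add00 hCC addr0.
  have : y^T *m M *m (y - x) = 0 by rewrite -mulmxA hMw mulmx0.
  rewrite mulmxBr => /eqP; rewrite subr_eq0 => /eqP ->.
  have : x^T *m M *m (y - x) = 0 by rewrite -mulmxA hMw mulmx0.
  rewrite mulmxBr => /eqP; rewrite subr_eq0 => /eqP <-.
  have hMt : M^T = M by rewrite /M !trmx_mul trmxK (hDt hDdiag) mulmxA.
  have sc : forall X : 'M[R]_1, X 0 0 = X^T 0 0 by move=> X; rewrite mxE.
  rewrite [LHS]sc.
  by rewrite trmx_mul (trmx_mul y^T M) trmxK hMt mulmxA.
rewrite hSy => hfin.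
have hyy : 1 <= (y^T *m y) 0 0 by rewrite -hxx.
have hlpos : 0 < lam by case: hlam.
apply: (le_trans hvl); apply: le_trans hfin.
by rewrite -{1}[lam]mulr1 ler_wpM2l // ltW.
Qed.
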